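(* For every formula $\varphi$ of $\mathcal L^{\bigcirc}_\square$: $\varphi$ is derivable in $\mathbf{wK4C}$ if and only if $\varphi$ is valid on every finite dynamic $\mathbf{wK4}$ frame.
   Context: Fix a non-empty set $\mathsf{PV}$ of propositional variables. The language $\mathcal L^{\bigcirc}_\square$ is given by $\varphi::= p\mid \varphi\wedge\varphi\mid\neg\varphi\mid\square\varphi\mid\bigcirc\varphi$ with $p\in\mathsf{PV}$; $\lozenge:=\neg\square\neg$, and $\vee,\to,\leftrightarrow,\top,\bot$ are defined as usual. Axioms and rules: Taut (all propositional tautologies); K: $\square(\varphi\to\psi)\to(\square\varphi\to\square\psi)$; w4: $\varphi\wedge\square\varphi\to\square\square\varphi$; ${\rm Next}_\neg$: $\neg\bigcirc\varphi\leftrightarrow\bigcirc\neg\varphi$; ${\rm Next}_\wedge$: $\bigcirc(\varphi\wedge\psi)\leftrightarrow\bigcirc\varphi\wedge\bigcirc\psi$; C: $\bigcirc\varphi\wedge\bigcirc\square\varphi\to\square\bigcirc\varphi$; rules modus ponens, ${\rm Nec}_\square$ (from $\varphi$ infer $\square\varphi$) and ${\rm Nec}_\bigcirc$ (from $\varphi$ infer $\bigcirc\varphi$). $\mathbf{K}$ is the logic given by Taut, K, MP, ${\rm Nec}_\square$; $\mathbf{wK4}:=\mathbf K+{\rm w4}$; $\mathbf{wK4C}:=\mathbf{wK4}+{\rm Next}_\neg+{\rm Next}_\wedge+{\rm Nec}_\bigcirc+{\rm C}$ (closed under all the rules). A dynamic Kripke frame is a triple $\langle W,\sqsubset,f\rangle$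 with $W$ a non-empty set, $\sqsubset$ a binary relation on $W$ and $f\colon W\to W$ a function which is weakly monotone: for all $w,v\in W$, $w\sqsubset v$ implies $f(w)=f(v)$ or $f(w)\sqsubset f(v)$. It is a dynamic $\mathbf{wK4}$ frame if $\sqsubset$ is weakly transitive: $w\sqsubset v\sqsubset u$ and $w\neq u$ imply $w\sqsubset u$. A valuation is a map $\nu\colon\mathsf{PV}\to\wp(W)$; truth is defined by $w\models p$ iff $w\in\nu(p)$, Boolean clauses as usual, $w\models\square\varphi$ iff $v\models\varphi$ for all $v$ with $w\sqsubset v$, and $w\models\bigcirc\varphi$ iff $f(w)\models\varphi$. A formula is valid on a frame if it is true at every point under every valuation. *)

(* Defs.v *)
From Stdlib Require Import List.

Set Implicit Arguments.

Section Syntax.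
Variable PV : Type.

Inductive form : Type :=
| Var : PV -> form
| And : form -> form -> form
| Neg : form -> form
| Box : form -> form
| Next : form -> form.

Definition Imp (a b : form) : form := Neg (And a (Neg b)).
Definition Or (a b : form) : form := Neg (And (Neg a) (Neg b)).
Definition Iff (a b : form) : form := And (Imp a b) (Imp b a).
Definition Dia (a : form) : form := Neg (Box (Neg a)).

(* Propositional tautologies of the modal language: formulas true under every
   Boolean assignment to the propositionally atomic subformulas
   (variables, □ψ and ○ψ), with ∧ and ¬ evaluated truth-functionally. *)
Fixpoint beval (g : form -> bool) (a : form) : bool :=
  match a with
  | And b c => andb (beval g b) (beval g c)
  | Neg b => negb (beval g b)
  | _ => g a
  end.

Definition is_taut (a : form) : Prop := forall g : form -> bool, beval g a = true.

Inductive wK4C : form -> Prop :=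
| ax_taut : forall a, is_taut a -> wK4C a
| ax_K : forall a b, wK4C (Imp (Box (Imp a b)) (Imp (Box a) (Box b)))
| ax_w4 : forall a, wK4C (Imp (And a (Box a)) (Box (Box a)))
| ax_next_neg : forall a, wK4C (Iff (Neg (Next a)) (Next (Neg a)))
| ax_next_and : forall a b, wK4C (Iff (Next (And a b)) (And (Next a) (Next b)))
| ax_C : forall a, wK4C (Imp (And (Next a) (Next (Box a))) (Box (Next a)))
| r_mp : forall a b, wK4C (Imp a b) -> wK4C a -> wK4C b
| r_nec_box : forall a, wK4C a -> wK4C (Box a)
| r_nec_next : forall a, wK4C a -> wK4C (Next a).

Fixpoint sat (W : Type) (R : W -> W -> Prop) (f : W -> W) (nu : PV -> W -> Prop)
  (w : W) (a : form) : Prop :=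
  match a with
  | Var p => nu p w
  | And b c => sat R f nu w b /\ sat R f nu w c
  | Neg b => ~ sat R f nu w b
  | Box b => forall v, R w v -> sat R f nu v b
  | Next b => sat R f nu (f w) b
  end.

End Syntax.

Arguments Var {PV}.

Definition finite_type (W : Type) : Prop := exists l : list W, forall w : W, In w l.

Definition weakly_monotone (W : Type) (R : W -> W -> Prop) (f : W -> W) : Prop :=
  forall w v, R w v -> f w = f v \/ R (f w) (f v).

Definition weakly_transitive (W : Type) (R : W -> W -> Prop) : Prop :=
  forall w v u, R w v -> R v u -> w <> u -> R w u.

Definition finite_dyn_wK4_frame (W : Type) (R : W -> W -> Prop) (f : W -> W) : Prop :=
  inhabited W /\ finite_type W /\ weakly_transitive R /\ weakly_monotone R f.

Definition valid_on (PV W : Type) (R : W -> W -> Prop) (f : W -> W) (a : form PV) : Prop :=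
  forall (nu : PV -> W -> Prop) (w : W), sat R f nu w a.

(* Main.v *)
Require Import Defs.
From Stdlib Require Import List Classical ClassicalEpsilon FunctionalExtensionality PropExtensionality ProofIrrelevance Arith Lia.
Import ListNotations.


Set Implicit Arguments.
Arguments And {PV}. Arguments Neg {PV}. Arguments Box {PV}. Arguments Next {PV}.

Section Basic.
Variable PV : Type.
Notation form := (form PV).

Ltac taut := unfold is_taut, Iff, Or, Dia, Imp; let g := fresh "g" in intro g; cbn [beval];
  repeat match goal with
  | |- context [beval g ?X] => destruct (beval g X)
  | |- context [g ?X] => destruct (g X)
  end; reflexivity.

Lemma tmp (a b : form) : is_taut (Imp a b) -> wK4C a -> wK4C b.
Proof. intros H1 H2. eapply r_mp; [apply ax_taut; exact H1| exact H2]. Qed.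

Lemma tmp2 (a b c : form) : is_taut (Imp a (Imp b c)) -> wK4C a -> wK4C b -> wK4C c.
Proof. intros H1 H2 H3. eapply r_mp; [eapply r_mp; [apply ax_taut; exact H1| exact H2]|exact H3]. Qed.

Lemma tmp3 (a b c d : form) : is_taut (Imp a (Imp b (Imp c d))) -> wK4C a -> wK4C b -> wK4C c -> wK4C d.
Proof. intros H1 H2 H3 H4. eapply r_mp; [|exact H4]. eapply tmp2; eauto. Qed.

Lemma mp (a b : form) : wK4C (Imp a b) -> wK4C a -> wK4C b.
Proof. apply r_mp. Qed.

Lemma imp_trans (a b c : form) : wK4C (Imp a b) -> wK4C (Imp b c) -> wK4C (Imp a c).
Proof. apply tmp2. taut. Qed.

Lemma iff_l (a b : form) : wK4C (Iff a b) -> wK4C (Imp a b).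
Proof. apply tmp. taut. Qed.
Lemma iff_r (a b : form) : wK4C (Iff a b) -> wK4C (Imp b a).
Proof. apply tmp. taut. Qed.

Lemma box_mono (a b : form) : wK4C (Imp a b) -> wK4C (Imp (Box a) (Box b)).
Proof. intro H. apply r_nec_box in H. eapply mp; [apply ax_K|exact H]. Qed.

Lemma box_and (a b : form) : wK4C (Imp (And (Box a) (Box b)) (Box (And a b))).
Proof.
  assert (H1 : wK4C (Imp a (Imp b (And a b)))) by (apply ax_taut; taut).
  apply box_mono in H1.
  assert (H2 := ax_K b (And a b)).
  eapply tmp2; [|exact H1|exact H2]. taut.
Qed.

Lemma next_neg1 (a : form) : wK4C (Imp (Neg (Next a)) (Next (Neg a))).
Proof. apply iff_l, ax_next_neg. Qed.
Lemma next_neg2 (a : form) : wK4C (Imp (Next (Neg a)) (Neg (Next a))).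
Proof. apply iff_r, ax_next_neg. Qed.
Lemma next_and1 (a b : form) : wK4C (Imp (Next (And a b)) (And (Next a) (Next b))).
Proof. apply iff_l, ax_next_and. Qed.
Lemma next_and2 (a b : form) : wK4C (Imp (And (Next a) (Next b)) (Next (And a b))).
Proof. apply iff_r, ax_next_and. Qed.

Lemma next_K (a b : form) : wK4C (Imp (Next (Imp a b)) (Imp (Next a) (Next b))).
Proof.
  unfold Imp at 1 2.
  assert (H1 := next_neg2 (And a (Neg b))).
  assert (H2 := next_and2 a (Neg b)).
  assert (H3 := next_neg1 b).
  eapply tmp3; [|exact H1|exact H2|exact H3]. taut.
Qed.

Lemma next_mono (a b : form) : wK4C (Imp a b) -> wK4C (Imp (Next a) (Next b)).
Proof. intro H. apply r_nec_next in H. eapply mp; [apply next_K|exact H]. Qed.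

End Basic.

Section Sound.
Variable PV : Type.
Variables (W : Type) (R : W -> W -> Prop) (f : W -> W).
Hypothesis wt : weakly_transitive R.
Hypothesis wm : weakly_monotone R f.

Definition dec (P : Prop) : bool := if excluded_middle_informative P then true else false.
Lemma dec_true (P : Prop) : dec P = true <-> P.
Proof. unfold dec; destruct (excluded_middle_informative P); split; intros; auto; discriminate. Qed.
Lemma dec_false (P : Prop) : dec P = false <-> ~ P.
Proof. unfold dec; destruct (excluded_middle_informative P); split; intros; auto; try discriminate; contradiction. Qed.

Lemma beval_sat (nu : PV -> W -> Prop) (w : W) (a : form PV) :
  beval (fun b => dec (sat R f nu w b)) a = true <-> sat R f nu w a.
Proof.
  induction a; simpl.
  - apply dec_true.
  - rewrite Bool.andb_true_iff. rewrite IHa1. rewrite IHa2. tauto.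
  - rewrite Bool.negb_true_iff. split; intro H.
    + intro H'; apply IHa in H'; congruence.
    + destruct (beval _ a) eqn:E; auto. exfalso; apply H, IHa; reflexivity.
  - apply dec_true.
  - apply dec_true.
Qed.

Lemma soundness (a : form PV) : wK4C a -> forall nu w, sat R f nu w a.
Proof.
  induction 1; intros nu w; unfold Imp, Iff, Or in *; simpl in *.
  - apply beval_sat, H.
  - intros [H1 H2]; apply H2; intros [H3 H4]; apply H4; intros v Hv.
    apply NNPP; intro H5. apply (H1 v Hv). split; [apply H3, Hv|exact H5].
  - intros [[H1 H2] H3]. apply H3. intros v Hv u Hu. apply NNPP; intro H4.
    destruct (classic (w = u)) as [->|Hne]; [contradiction|].
    apply H4, H2, (wt Hv Hu Hne).
  - split; intros [H1 H2]; tauto.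
  - split; intros [H1 H2]; tauto.
  - intros [[H1 H2] H3]. apply H3. intros v Hv.
    destruct (wm Hv) as [E|E]; [rewrite <- E; exact H1| exact (H2 _ E)].
  - specialize (IHwK4C1 nu w). specialize (IHwK4C2 nu w). simpl in IHwK4C1. apply NNPP; intro; tauto.
  - intros v _; auto.
  - auto.
Qed.
End Sound.

Set Implicit Arguments.

Section Lind.
Variable PV : Type.
Notation form := (form PV).
Variable p0 : PV.
Variable L : list PV.
Hypothesis Hp0 : In p0 L.



Fixpoint vars (a : form) : list PV :=
  match a with
  | Var p => [p]
  | And b c => vars b ++ vars c
  | Neg b | Box b | Next b => vars b
  end.

Definition overL (a : form) := forall p, In p (vars a) -> In p L.

Lemma overL_And a b : overL (And a b) <-> overL a /\ overL b.
Proof. unfold overL; simpl; split.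
  - intro H; split; intros; apply H, in_or_app; auto.
  - intros [H1 H2] p Hp; apply in_app_or in Hp; destruct Hp; auto. Qed.
Lemma overL_Neg a : overL (Neg a) <-> overL a. Proof. reflexivity. Qed.
Lemma overL_Box a : overL (Box a) <-> overL a. Proof. reflexivity. Qed.
Lemma overL_Next a : overL (Next a) <-> overL a. Proof. reflexivity. Qed.
Lemma overL_Imp a b : overL (Imp a b) <-> overL a /\ overL b.
Proof. unfold Imp. rewrite overL_Neg, overL_And, overL_Neg. tauto. Qed.
Lemma overL_Or a b : overL (Or a b) <-> overL a /\ overL b.
Proof. unfold Or. rewrite overL_Neg, overL_And, !overL_Neg. tauto. Qed.

Definition top : form := Imp (Var p0) (Var p0).
Lemma top_thm : wK4C top. Proof. apply ax_taut; unfold is_taut, top, Imp; intro g; simpl; destruct (g (Var p0)); reflexivity. Qed.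
Lemma overL_top : overL top.
Proof. unfold top. apply overL_Imp; split; intros p Hp; simpl in Hp; destruct Hp as [<-|[]]; auto. Qed.

Definition conj (l : list form) : form := fold_right And top l.

Ltac taut := unfold conj; cbn [fold_right map app]; repeat match goal with |- context [fold_right And ?t ?l] => change (fold_right And t l) with (conj l) end;
  unfold is_taut, top, Iff, Or, Dia, Imp; let g := fresh "g" in intro g; cbn [beval];
  repeat match goal with
  | |- context [beval g ?X] => destruct (beval g X)
  | |- context [g ?X] => destruct (g X)
  end; reflexivity.

Lemma conj_in l a : In a l -> wK4C (Imp (conj l) a).
Proof.
  induction l as [|b l IH]; simpl; [tauto|]. intros [->|H].
  - apply ax_taut; taut.
  - eapply imp_trans; [|apply IH, H]. apply ax_taut; taut.
Qed.

Lemma conj_app l1 l2 : wK4C (Imp (And (conj l1) (conj l2)) (conj (l1 ++ l2))).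
Proof.
  induction l1 as [|b l IH]; simpl.
  - apply ax_taut; taut.
  - eapply tmp; [|exact IH]. taut.
Qed.

Lemma conj_app2 l1 l2 : wK4C (Imp (conj (l1 ++ l2)) (And (conj l1) (conj l2))).
Proof.
  induction l1 as [|b l IH]; simpl.
  - apply ax_taut; taut.
  - eapply tmp; [|exact IH]. taut.
Qed.

Lemma box_conj l : wK4C (Imp (conj (map Box l)) (Box (conj l))).
Proof.
  induction l as [|b l IH]; simpl.
  - eapply tmp; [|apply r_nec_box, top_thm]. taut.
  - eapply tmp2; [|exact IH|apply (box_and b (conj l))]. taut.
Qed.

Lemma next_conj l : wK4C (Imp (conj (map Next l)) (Next (conj l))).
Proof.
  induction l as [|b l IH]; simpl.
  - eapply tmp; [|apply r_nec_next, top_thm]. taut.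
  - eapply tmp2; [|exact IH|apply (next_and2 b (conj l))]. taut.
Qed.

Lemma drop_lemma (P : form -> Prop) psi l :
  (forall a, In a l -> P a \/ a = psi) ->
  exists l', (forall a, In a l' -> P a) /\ wK4C (Imp (And (conj l') psi) (conj l)).
Proof.
  induction l as [|b l IH]; intro H.
  - exists []. split; [simpl; tauto|]. simpl. apply ax_taut; taut.
  - destruct IH as [l' [H1 H2]]; [intros; apply H; simpl; auto|].
    destruct (H b (or_introl eq_refl)) as [Hb| ->].
    + exists (b :: l'). split; [simpl; intros a [->|Ha]; auto|].
      simpl. eapply tmp; [|exact H2]. taut.
    + exists l'. split; auto. simpl. eapply tmp; [|exact H2]. taut.
Qed.

Definition cons (S : form -> Prop) := forall l, (forall a, In a l -> S a) -> ~ wK4C (Neg (conj l)).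

Definition mcs (G : form -> Prop) :=
  (forall a, G a -> overL a) /\ cons G /\ (forall a, overL a -> G a \/ G (Neg a)).

Section M.
Variable G : form -> Prop.
Hypothesis HG : mcs G.

Lemma mcs_closed l a : (forall x, In x l -> G x) -> wK4C (Imp (conj l) a) -> overL a -> G a.
Proof.
  intros Hl Hd Ha. destruct HG as [_ [Hc Hm]]. destruct (Hm a Ha) as [?|Hn]; auto.
  exfalso. apply (Hc (Neg a :: l)).
  - simpl; intros x [<-|Hx]; auto.
  - simpl. eapply tmp; [|exact Hd]. taut.
Qed.

Lemma mcs_thm a : wK4C a -> overL a -> G a.
Proof. intros H Ha. apply (@mcs_closed []); [simpl; tauto| |auto].
  eapply tmp; [|exact H]. taut. Qed.

Lemma mcs_neg a : overL a -> (G (Neg a) <-> ~ G a).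
Proof.
  intros Ha. destruct HG as [_ [Hc Hm]]. split.
  - intros H1 H2. apply (Hc [a; Neg a]).
    + simpl; intros x [<-|[<-|[]]]; auto.
    + simpl. apply ax_taut; taut.
  - intro H. destruct (Hm a Ha); tauto.
Qed.

Lemma mcs_and a b : overL (And a b) -> (G (And a b) <-> G a /\ G b).
Proof.
  intros Hab. pose proof Hab as Hab'. apply overL_And in Hab' as [Ha Hb]. split.
  - intro H; split.
    + apply (@mcs_closed [And a b]); auto. simpl; intros x [<-|[]]; auto.
      simpl; apply ax_taut; taut.
    + apply (@mcs_closed [And a b]); auto. simpl; intros x [<-|[]]; auto.
      simpl; apply ax_taut; taut.
  - intros [H1 H2]. apply (@mcs_closed [a; b]); auto.
    simpl; intros x [<-|[<-|[]]]; auto. simpl; apply ax_taut; taut.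
Qed.

Lemma mcs_mp a b : G (Imp a b) -> G a -> G b.
Proof.
  intros H1 H2. assert (Hb : overL b) by (destruct HG as [Ho _]; apply Ho, overL_Imp in H1; tauto).
  apply (@mcs_closed [Imp a b; a]); auto.
  simpl; intros x [<-|[<-|[]]]; auto. simpl; apply ax_taut; taut.
Qed.

Lemma mcs_thm_mp a b : wK4C (Imp a b) -> G a -> overL b -> G b.
Proof. intros H1 H2 Hb. apply (@mcs_closed [a]); auto.
  simpl; intros x [<-|[]]; auto. simpl. eapply tmp; [|exact H1]. taut. Qed.

Lemma mcs_overL a : G a -> overL a. Proof. apply HG. Qed.

End M.

Fixpoint forms (n : nat) : list form :=
  match n with
  | 0 => map Var L
  | S n => let F := forms n in
      F ++ flat_map (fun a => map (And a) F) F ++ map Neg F ++ map Box F ++ map Next F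
  end.

Fixpoint ht (a : form) : nat :=
  match a with
  | Var _ => 0
  | And b c => S (max (ht b) (ht c))
  | Neg b | Box b | Next b => S (ht b)
  end.

Lemma forms_S n a : In a (forms n) -> In a (forms (S n)).
Proof. intro H; simpl; apply in_or_app; auto. Qed.

Lemma forms_le n m a : n <= m -> In a (forms n) -> In a (forms m).
Proof. induction 1; auto. intro; apply forms_S; auto. Qed.

Lemma overL_forms a : overL a -> In a (forms (ht a)).
Proof.
  induction a; intro H; simpl.
  - apply in_map, H; simpl; auto.
  - apply overL_And in H as [H1 H2].
    apply in_or_app; right; apply in_or_app; left. apply in_flat_map.
    exists a1; split; [apply (forms_le (n := ht a1)); [lia|auto]|].
    apply in_map. apply (forms_le (n := ht a2)); [lia|auto].
  - do 2 (apply in_or_app; right); apply in_or_app; left; apply in_map; auto.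
  - do 3 (apply in_or_app; right); apply in_or_app; left; apply in_map; auto.
  - do 4 (apply in_or_app; right); apply in_map; auto.
Qed.

Lemma forms_overL n a : In a (forms n) -> overL a.
Proof.
  revert a; induction n; simpl; intros a H.
  - apply in_map_iff in H as [p [<- Hp]]. intros q Hq; simpl in Hq; destruct Hq as [<-|[]]; auto.
  - repeat (apply in_app_or in H; destruct H as [H|H]).
    + exact (IHn a H).
    + apply in_flat_map in H as [b [Hb H]]. apply in_map_iff in H as [c [<- Hc]].
      apply overL_And; split; [exact (IHn b Hb)|exact (IHn c Hc)].
    + apply in_map_iff in H as [c [<- Hc]]; exact (IHn c Hc).
    + apply in_map_iff in H as [c [<- Hc]]; exact (IHn c Hc).
    + apply in_map_iff in H as [c [<- Hc]]; exact (IHn c Hc).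
Qed.

Section Lindenbaum.
Variable S0 : form -> Prop.
Hypothesis HS0c : cons S0.
Hypothesis HS0o : forall a, S0 a -> overL a.

Definition consL (g : list form) := cons (fun a => S0 a \/ In a g).

Definition step (g : list form) (a : form) : list form :=
  if excluded_middle_informative (consL (a :: g)) then a :: g else Neg a :: g.

Lemma step_cons g a : consL g -> consL (step g a).
Proof.
  unfold step; destruct excluded_middle_informative as [H|H]; intros Hg; auto.
  intros l Hl Hd. apply H. intros l2 Hl2 Hd2.
  destruct (@drop_lemma (fun x => S0 x \/ In x g) (a) l2) as [l2' [H1 H2]].
  { intros x Hx. destruct (Hl2 x Hx) as [?|[<-|?]]; auto. }
  destruct (@drop_lemma (fun x => S0 x \/ In x g) (Neg a) l) as [l' [H3 H4]].
  { intros x Hx. destruct (Hl x Hx) as [?|[<-|?]]; auto. }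
  apply (Hg (l2' ++ l')).
  - intros x Hx; apply in_app_or in Hx; destruct Hx; auto.
  - assert (E1 : wK4C (Imp (conj l2') (Neg a))) by (eapply tmp2; [|exact Hd2|exact H2]; taut).
    assert (E2 : wK4C (Imp (conj l') a)) by (eapply tmp2; [|exact Hd|exact H4]; taut).
    eapply tmp3; [|exact E1|exact E2|apply (conj_app2 l2' l')]. taut.
Qed.


Lemma cons0 : consL [].
Proof. intros l Hl. apply HS0c. intros a Ha; destruct (Hl a Ha) as [?|[]]; auto. Qed.

Lemma fold_cons fs : forall g, consL g -> consL (fold_left step fs g).
Proof. induction fs as [|a fs IH]; simpl; auto. intros g Hg; apply IH, step_cons, Hg. Qed.

Lemma step_incl g a b : In b g -> In b (step g a).
Proof. unfold step; destruct excluded_middle_informative; simpl; auto. Qed.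

Lemma fold_incl fs : forall g b, In b g -> In b (fold_left step fs g).
Proof. induction fs as [|a fs IH]; simpl; auto. intros g b Hb; apply IH, step_incl, Hb. Qed.

Lemma fold_dec fs : forall g a, In a fs -> In a (fold_left step fs g) \/ In (Neg a) (fold_left step fs g).
Proof.
  induction fs as [|b fs IH]; simpl; [tauto|]. intros g a [->|Ha]; auto.
  unfold step at 2 4; destruct excluded_middle_informative; [left|right]; apply fold_incl; simpl; auto.
Qed.

Lemma fold_overL fs : (forall a, In a fs -> overL a) -> forall g, (forall a, In a g -> overL a) ->
  forall a, In a (fold_left step fs g) -> overL a.
Proof.
  intro Hfs. induction fs as [|b fs IH]; simpl; auto. intros g Hg. apply IH.
  - intros; apply Hfs; simpl; auto.
  - unfold step; destruct excluded_middle_informative; simpl; intros a [<-|Ha]; auto.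
    + apply Hfs; simpl; auto.
    + apply overL_Neg; apply Hfs; simpl; auto.
Qed.

Fixpoint stage (n : nat) : list form :=
  match n with 0 => [] | S n => fold_left step (forms n) (stage n) end.

Lemma stage_cons n : consL (stage n).
Proof. induction n; simpl; [apply cons0|apply fold_cons, IHn]. Qed.

Lemma stage_le n m a : n <= m -> In a (stage n) -> In a (stage m).
Proof. induction 1; auto. intro H'; simpl; apply fold_incl; auto. Qed.

Lemma stage_overL n a : In a (stage n) -> overL a.
Proof.
  revert a; induction n; simpl; [tauto|]. apply fold_overL; auto. apply forms_overL.
Qed.

Definition Lind (a : form) : Prop := S0 a \/ exists n, In a (stage n).

Lemma Lind_incl a : S0 a -> Lind a. Proof. left; auto. Qed.

Lemma Lind_mcs : mcs Lind.
Proof.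
  split; [|split].
  - intros a [H|[n H]]; [auto|eapply stage_overL; eauto].
  - intros l Hl. assert (exists n, forall a, In a l -> S0 a \/ In a (stage n)) as [n Hn].
    { clear -Hl. induction l as [|b l IH].
      - exists 0; simpl; tauto.
      - destruct IH as [n Hn]; [intros; apply Hl; simpl; auto|].
        destruct (Hl b (or_introl eq_refl)) as [Hb|[m Hm]].
        + exists n. simpl; intros a [<-|Ha]; auto.
        + exists (max n m). simpl; intros a [<-|Ha].
          * right; apply (stage_le (n := m)); [lia|auto].
          * destruct (Hn a Ha); auto. right; apply (stage_le (n := n)); [lia|auto]. }
    apply (stage_cons n); auto.
  - intros a Ha. destruct (@fold_dec (forms (ht a)) (stage (ht a)) a (overL_forms Ha)) as [H|H].
    + left; right; exists (S (ht a)); auto.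
    + right; right; exists (S (ht a)); auto.
Qed.

End Lindenbaum.
End Lind.

Unset Implicit Arguments.


Section Canon.
Variable PV : Type.
Notation form := (form PV).
Variable p0 : PV.
Variable L : list PV.
Hypothesis Hp0 : In p0 L.

Notation overL := (overL L).
Notation mcs := (mcs p0 L).
Notation conj := (conj p0).

Ltac taut := unfold conj; cbn [fold_right map app]; repeat match goal with |- context [fold_right And ?t ?l] => change (fold_right And t l) with (conj l) end;
  unfold is_taut, top, Iff, Or, Dia, Imp; let g := fresh "g" in intro g; cbn [beval];
  repeat match goal with
  | |- context [beval g ?X] => destruct (beval g X)
  | |- context [g ?X] => destruct (g X)
  end; reflexivity.

Record mw := MW { th : form -> Prop; th_mcs : mcs th }.

Lemma mw_eq (x y : mw) : (forall a, th x a <-> th y a) -> x = y.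
Proof.
  destruct x as [tx hx], y as [ty hy]; simpl; intro H.
  assert (tx = ty) by (apply functional_extensionality; intro a; apply propositional_extensionality, H).
  subst; f_equal; apply proof_irrelevance.
Qed.

Lemma th_overL (x : mw) a : th x a -> overL a.
Proof. intro H; exact (mcs_overL (th_mcs x) a H). Qed.

Lemma th_neg (x : mw) a : overL a -> (th x (Neg a) <-> ~ th x a).
Proof. intro H; exact (mcs_neg (th_mcs x) H). Qed.

Lemma th_or (x : mw) a b : th x (Or a b) -> th x a \/ th x b.
Proof.
  intro H. pose proof (th_overL x _ H) as Ho. apply overL_Or in Ho as [Ha Hb].
  apply NNPP; intro Hn. unfold Or in H. apply (th_neg x) in H; [|apply overL_And; split; apply overL_Neg; auto].
  apply H. apply (mcs_and (th_mcs x)); [apply overL_And; split; apply overL_Neg; auto|].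
  split; apply (th_neg x); auto.
Qed.

Lemma mw_neq (x y : mw) : x <> y -> exists a, th x a /\ ~ th y a.
Proof.
  intro H. apply NNPP; intro Hn. apply H, mw_eq. intro a. split; intro Ha.
  - apply NNPP; intro Hy. apply Hn; eauto.
  - apply NNPP; intro Hx. pose proof (th_overL _ _ Ha) as Ho.
    apply (th_neg x a Ho) in Hx. apply Hn. exists (Neg a); split; auto.
    rewrite (th_neg y a Ho); auto.
Qed.

Definition Rc (x y : mw) : Prop := forall a, th x (Box a) -> th y a.

Lemma mcs_next (G : form -> Prop) : mcs G -> mcs (fun a => G (Next a)).
Proof.
  intro HG. split; [|split].
  - intros a Ha. apply (mcs_overL HG) in Ha. exact Ha.
  - intros l Hl Hd. destruct HG as [Ho [Hc Hm]].
    apply (Hc (map Next l)).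
    + intros a Ha. apply in_map_iff in Ha as [b [<- Hb]]. auto.
    + apply r_nec_next in Hd. pose proof (next_neg2 (conj l)) as H1. pose proof (next_conj p0 l) as H2.
      eapply tmp3; [|exact Hd|exact H1|exact H2]. taut.
  - intros a Ha. destruct (proj2 (proj2 HG) (Next a) Ha) as [H|H]; auto. right.
    eapply (mcs_thm_mp HG); [apply next_neg1|exact H|exact Ha].
Qed.

Definition fc (x : mw) : mw := MW (fun a => th x (Next a)) (mcs_next (th x) (th_mcs x)).

Lemma fc_th x a : th (fc x) a <-> th x (Next a).
Proof. reflexivity. Qed.

Lemma box_lemma (x : mw) a : overL a -> (th x (Box a) <-> forall y, Rc x y -> th y a).
Proof.
  intro Ha. split; [intros H y Hy; apply Hy, H|]. intro H. apply NNPP; intro Hn.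
  set (S0 := fun b => th x (Box b) \/ b = Neg a).
  assert (HS : cons p0 S0).
  { intros l Hl Hd.
    destruct (@drop_lemma PV p0 (fun b => th x (Box b)) (Neg a) l) as [l' [H1 H2]].
    { intros b Hb; destruct (Hl b Hb); auto. }
    assert (H3 : wK4C (Imp (conj l') a)) by (eapply tmp2; [|exact Hd|exact H2]; taut).
    apply box_mono in H3. pose proof (box_conj p0 l') as H4.
    apply Hn. apply (@mcs_closed _ p0 L _ (th_mcs x) (map Box l')).
    - intros b Hb. apply in_map_iff in Hb as [c [<- Hc]]; auto.
    - eapply imp_trans; eauto.
    - exact Ha. }
  assert (HSo : forall b, S0 b -> overL b).
  { intros b [Hb| ->]; [exact (th_overL _ _ Hb)|exact Ha]. }
  set (D := MW _ (Lind_mcs HS HSo)).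
  assert (HR : Rc x D) by (intros b Hb; apply Lind_incl; left; auto).
  specialize (H D HR). assert (th D (Neg a)) by (apply Lind_incl; right; auto).
  apply (th_neg D) in H0; auto.
Qed.

Lemma Rc_wt : weakly_transitive Rc.
Proof.
  intros x y z Hxy Hyz Hne c Hc.
  destruct (mw_neq _ _ Hne) as [a [Ha Hza]].
  assert (Hoc : overL c) by exact (th_overL _ _ Hc).
  assert (Hoa : overL a) by exact (th_overL _ _ Ha).
  assert (Hoal : overL (Or c a)) by (apply overL_Or; auto).
  assert (H1 : th x (Or c a)) by (eapply (mcs_thm_mp (th_mcs x)); [|exact Ha|exact Hoal]; apply ax_taut; taut).
  assert (H2 : th x (Box (Or c a))).
  { eapply (mcs_thm_mp (th_mcs x)); [|exact Hc|exact Hoal]. apply box_mono, ax_taut; taut. }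
  assert (H3 : th x (Box (Box (Or c a)))).
  { apply (@mcs_closed _ p0 L _ (th_mcs x) [Or c a; Box (Or c a)]).
    - simpl; intros b [<-|[<-|[]]]; auto.
    - pose proof (ax_w4 (Or c a)). eapply tmp; [|exact H]. taut.
    - exact Hoal. }
  apply Hxy, Hyz, (th_or z) in H3. tauto.
Qed.

Lemma Rc_wm : weakly_monotone Rc fc.
Proof.
  intros x y Hxy. destruct (classic (fc x = fc y)) as [E|Hne]; [left; auto|right].
  destruct (mw_neq _ _ Hne) as [a [Ha Hya]]. rewrite fc_th in Ha, Hya.
  intros c Hc. rewrite fc_th in Hc. rewrite fc_th.
  assert (Hoc : overL c) by exact (th_overL _ _ Hc).
  assert (Hoa : overL a) by exact (th_overL _ _ Ha).
  assert (Hoal : overL (Or c a)) by (apply overL_Or; auto).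
  assert (H1 : th x (Next (Or c a))).
  { eapply (mcs_thm_mp (th_mcs x)); [|exact Ha|exact Hoal]. apply next_mono, ax_taut; taut. }
  assert (H2 : th x (Next (Box (Or c a)))).
  { eapply (mcs_thm_mp (th_mcs x)); [|exact Hc|exact Hoal]. apply next_mono, box_mono, ax_taut; taut. }
  assert (H3 : th x (Box (Next (Or c a)))).
  { apply (@mcs_closed _ p0 L _ (th_mcs x) [Next (Or c a); Next (Box (Or c a))]).
    - simpl; intros b [<-|[<-|[]]]; auto.
    - pose proof (ax_C (Or c a)). eapply tmp; [|exact H]. taut.
    - exact Hoal. }
  apply Hxy in H3. apply (th_or (fc y)) in H3. tauto.
Qed.

End Canon.


Lemma dec_iff (P Q : Prop) : (P <-> Q) -> dec P = dec Q.
Proof. intro H. unfold dec. destruct (excluded_middle_informative P), (excluded_middle_informative Q); tauto. Qed.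

Fixpoint allbools (n : nat) : list (list bool) :=
  match n with 0 => [[]] | S n => map (fun l => true :: l) (allbools n) ++ map (fun l => false :: l) (allbools n) end.

Lemma allbools_in (l : list bool) : In l (allbools (length l)).
Proof.
  induction l as [|b l IH]; simpl; auto. apply in_or_app. destruct b; [left|right]; apply in_map; auto.
Qed.

Fixpoint subseqs {A} (l : list A) : list (list A) :=
  match l with [] => [[]] | a :: l => map (fun s => a :: s) (subseqs l) ++ subseqs l end.

Lemma filter_subseqs {A} (p : A -> bool) l : In (filter p l) (subseqs l).
Proof.
  induction l as [|a l IH]; simpl; auto. apply in_or_app. destruct (p a); [left; apply in_map|right]; auto.
Qed.

Lemma map_eq_in {A B} (f g : A -> B) l a : map f l = map g l -> In a l -> f a = g a.
Proof.
  induction l as [|b l IH]; simpl; [tauto|]. intros H [->|Ha]; injection H; intros; auto.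
Qed.

Lemma in_filter_dec {A} (P : A -> Prop) l v : In v l -> P v -> In v (filter (fun v => dec (P v)) l).
Proof. intros H1 H2. apply filter_In; split; auto. apply dec_true; auto. Qed.

Lemma filter_dec_in {A} (P : A -> Prop) l v : In v (filter (fun v => dec (P v)) l) -> P v.
Proof. intro H. apply filter_In in H as [_ H]. apply dec_true; auto. Qed.

Section Fin.
Variable PV : Type.
Notation form := (form PV).
Variable p0 : PV.
Variable L : list PV.
Notation mw := (mw PV p0 L).
Notation th := (th PV p0 L).
Notation Rc := (Rc PV p0 L).
Notation fc := (fc PV p0 L).
Notation overL := (overL L).
Variable phi : form.
Hypothesis Hphi : overL phi.
Variable x0 : mw.

Fixpoint subs (a : form) : list form :=
  a :: match a with
       | Var _ => []
       | And b c => subs b ++ subs c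
       | Neg b | Box b | Next b => subs b
       end.

Fixpoint odepth (a : form) : nat :=
  match a with
  | Var _ => 0
  | And b c => max (odepth b) (odepth c)
  | Neg b | Box b => odepth b
  | Next b => S (odepth b)
  end.

Lemma subs_refl a : In a (subs a). Proof. destruct a; simpl; auto. Qed.

Lemma subs_trans a b c : In b (subs a) -> In c (subs b) -> In c (subs a).
Proof.
  induction a; intros Hb Hc; simpl in Hb; destruct Hb as [<-|Hb]; try exact Hc; simpl; right.
  - destruct Hb.
  - apply in_app_or in Hb; apply in_or_app; destruct Hb; [left; eauto|right; eauto].
  - eauto.
  - eauto.
  - eauto.
Qed.

Lemma subs_overL a b : overL a -> In b (subs a) -> overL b.
Proof.
  induction a; intros Ha Hb; simpl in Hb; destruct Hb as [<-|Hb]; try exact Ha.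
  - destruct Hb.
  - apply overL_And in Ha as [H1 H2]. apply in_app_or in Hb as [H|H]; eauto.
  - apply IHa; auto.
  - apply IHa; auto.
  - apply IHa; auto.
Qed.

Definition Nd := odepth phi.
Definition Phi (j : nat) : list form := filter (fun b => odepth b <=? j) (subs phi).

Lemma Phi_iff j b : In b (Phi j) <-> In b (subs phi) /\ odepth b <= j.
Proof. unfold Phi. rewrite filter_In, Nat.leb_le. tauto. Qed.

Lemma Phi_overL j b : In b (Phi j) -> overL b.
Proof. intro H; apply Phi_iff in H as [H _]; eapply subs_overL; eauto. Qed.

Lemma Phi_sub j b c : In b (Phi j) -> In c (subs b) -> odepth c <= odepth b -> In c (Phi j).
Proof. rewrite !Phi_iff. intros [H1 H2] H3 H4. split; [eapply subs_trans; eauto|lia]. Qed.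

Lemma Phi_And j b c : In (And b c) (Phi j) -> In b (Phi j) /\ In c (Phi j).
Proof. intro H; split.
  - apply (Phi_sub j (And b c) b H); simpl; [right; apply in_or_app; left; apply subs_refl|lia].
  - apply (Phi_sub j (And b c) c H); simpl; [right; apply in_or_app; right; apply subs_refl|lia].
Qed.
Lemma Phi_Neg j b : In (Neg b) (Phi j) -> In b (Phi j).
Proof. intro H; refine (Phi_sub j _ b H _ _); simpl; [right; apply subs_refl|lia]. Qed.
Lemma Phi_Box j b : In (Box b) (Phi j) -> In b (Phi j).
Proof. intro H; refine (Phi_sub j _ b H _ _); simpl; [right; apply subs_refl|lia]. Qed.
Lemma Phi_Next j b : In (Next b) (Phi j) -> exists j', j = S j' /\ In b (Phi j').
Proof.
  intro H. apply Phi_iff in H as [H1 H2]. simpl in H2. destruct j as [|j']; [lia|].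
  exists j'; split; auto. apply Phi_iff; split; [|lia]. eapply subs_trans; eauto. simpl; right; apply subs_refl.
Qed.

Lemma phi_Phi : In phi (Phi Nd).
Proof. apply Phi_iff; split; [apply subs_refl|unfold Nd; lia]. Qed.

Definition Req (x y : mw) := x = y \/ Rc x y.
Definition Cl (x u : mw) := Req x u /\ Req u x.
Definition Ab (x z : mw) := Rc x z /\ ~ Req z x.

Lemma Req_refl x : Req x x. Proof. left; auto. Qed.
Lemma Req_trans x y z : Req x y -> Req y z -> Req x z.
Proof.
  intros [->|H1] [->|H2]; unfold Req; auto.
  destruct (classic (x = z)) as [E|E]; auto. right; exact (Rc_wt PV p0 L x y z H1 H2 E).
Qed.
Lemma Req_up x u : Req x u -> Cl x u \/ Ab x u.
Proof.
  intro H. destruct (classic (Req u x)) as [H'|H']; [left; split; auto|right; split; auto].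
  destruct H as [->|H]; auto. exfalso; apply H', Req_refl.
Qed.
Lemma Cl_R x u : Cl x u -> x <> u -> Rc x u.
Proof. intros [[E|H] _] N; [contradiction|auto]. Qed.
Lemma Cl_refl x : Cl x x. Proof. split; apply Req_refl. Qed.
Lemma Cl_iff x y u : Cl x y -> (Cl x u <-> Cl y u).
Proof. intros [H1 H2]; unfold Cl; split; intros [H3 H4]; split; eauto using Req_trans. Qed.
Lemma Ab_aux x y u : Req y x -> Ab x u -> Ab y u.
Proof.
  intros H2 [H3 H4]. split.
  - destruct (classic (y = u)) as [<-|E]; [exfalso; apply H4; auto|].
    destruct H2 as [<-|H2]; auto. exact (Rc_wt PV p0 L y x u H2 H3 E).
  - intro H5; apply H4; eauto using Req_trans.
Qed.
Lemma Ab_iff x y u : Cl x y -> (Ab x u <-> Ab y u).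
Proof. intros [H1 H2]; split; apply Ab_aux; auto. Qed.
Lemma Ab_Req x u : Ab x u -> Req x u. Proof. intros [H _]; right; auto. Qed.
Lemma Cl_sym x u : Cl x u -> Cl u x. Proof. intros [? ?]; split; auto. Qed.

Definition LV := (list bool * option mw)%type.
Definition CD := (list LV * list LV * list LV)%type.

Definition Irr (lab : mw -> LV) (x u : mw) : Prop :=
  Cl x u /\ ~ Rc u u /\ forall u', Cl x u' -> lab u' = lab u -> u' = u.

Definition cdata (lab : mw -> LV) (vals : list LV) (x : mw) : CD :=
  (filter (fun v => dec (exists u, Cl x u /\ lab u = v)) vals,
   filter (fun v => dec (exists u, Ab x u /\ lab u = v)) vals,
   filter (fun v => dec (exists u, Irr lab x u /\ lab u = v)) vals).

Definition cdvals (vals : list LV) : list CD :=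
  list_prod (list_prod (subseqs vals) (subseqs vals)) (subseqs vals).

Lemma cdata_in lab vals x : In (cdata lab vals x) (cdvals vals).
Proof. unfold cdata, cdvals. repeat apply in_prod; apply filter_subseqs. Qed.

Definition repOfV {B} (F : mw -> B) (v : B) : mw := epsilon (inhabits x0) (fun y => F y = v).

Lemma repOfV_spec {B} (F : mw -> B) x : F (repOfV F (F x)) = F x.
Proof. unfold repOfV. apply (epsilon_spec (inhabits x0) (fun y => F y = F x)). exists x; auto. Qed.

Definition tv (j : nat) (x : mw) : list bool := map (fun b => dec (th x b)) (Phi j).

Fixpoint level (j : nat) : (mw -> LV) * list LV :=
  match j with
  | 0 => (fun x => (tv 0 x, None), map (fun b => (b, None)) (allbools (length (Phi 0))))
  | S j' =>
      let lab := fst (level j') in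
      let vals := snd (level j') in
      let ptF := fun x => (lab x, cdata lab vals x) in
      (fun x => (tv (S j') x, Some (repOfV ptF (ptF (fc x)))),
       flat_map (fun b => map (fun v => (b, Some (repOfV ptF v))) (list_prod vals (cdvals vals)))
                (allbools (length (Phi (S j')))))
  end.

Definition lab j := fst (level j).
Definition vals j := snd (level j).
Definition cd j := cdata (lab j) (vals j).
Definition ptF j (x : mw) : LV * CD := (lab j x, cd j x).
Definition rep j x := repOfV (ptF j) (ptF j x).

Lemma lab_S j x : lab (S j) x = (tv (S j) x, Some (rep j (fc x))).
Proof. reflexivity. Qed.

Lemma lab_in j x : In (lab j x) (vals j).
Proof.
  revert x; induction j as [|j IH]; intro x; unfold lab, vals; simpl.
  - apply (in_map (fun b => (b, @None mw))). unfold tv. rewrite <- (length_map (fun b => dec (th x b))). apply allbools_in.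
  - apply in_flat_map. exists (tv (S j) x). split.
    + unfold tv. rewrite <- (length_map (fun b => dec (th x b)) (Phi (S j))). apply allbools_in.
    + apply in_map_iff. exists (ptF j (fc x)). split; [reflexivity|].
      apply in_prod; [apply IH|apply cdata_in].
Qed.


Lemma lab_fst j x : fst (lab j x) = tv j x.
Proof. destruct j; reflexivity. Qed.

Lemma lab_th j x y b : lab j x = lab j y -> In b (Phi j) -> (th x b <-> th y b).
Proof.
  intros H Hb. assert (E : tv j x = tv j y) by (rewrite <- !lab_fst, H; reflexivity).
  pose proof (map_eq_in _ _ _ _ E Hb) as E2. simpl in E2.
  split; intro Hx; apply dec_true; [rewrite <- E2|rewrite E2]; apply dec_true; auto.
Qed.

Lemma lab_S_rep j x y : lab (S j) x = lab (S j) y -> rep j (fc x) = rep j (fc y).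
Proof. rewrite !lab_S. intro H; injection H; auto. Qed.

Lemma rep_spec j x : ptF j (rep j x) = ptF j x.
Proof. apply repOfV_spec. Qed.
Lemma rep_eq j x y : ptF j x = ptF j y -> rep j x = rep j y.
Proof. unfold rep; intro H; rewrite H; reflexivity. Qed.
Lemma rep_idem j x : rep j (rep j x) = rep j x.
Proof. apply rep_eq, rep_spec. Qed.

Lemma K1 j x y u : cd j x = cd j y -> Cl x u -> exists v, Cl y v /\ lab j u = lab j v.
Proof.
  intros E Hu. assert (H : In (lab j u) (fst (fst (cd j x)))).
  { apply in_filter_dec; [apply lab_in|]. exists u; auto. }
  rewrite E in H. apply filter_dec_in in H as [v [H1 H2]]. exists v; auto.
Qed.

Lemma K2 j x y u : cd j x = cd j y -> Ab x u -> exists v, Ab y v /\ lab j u = lab j v.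
Proof.
  intros E Hu. assert (H : In (lab j u) (snd (fst (cd j x)))).
  { apply in_filter_dec; [apply lab_in|]. exists u; auto. }
  rewrite E in H. apply filter_dec_in in H as [v [H1 H2]]. exists v; auto.
Qed.

Lemma K3 j x y u v : cd j x = cd j y -> Irr (lab j) x u -> Cl y v -> lab j u = lab j v -> Irr (lab j) y v.
Proof.
  intros E Hu Hv Hl. assert (H : In (lab j u) (snd (cd j x))).
  { apply in_filter_dec; [apply lab_in|]. exists u; auto. }
  rewrite E in H. apply filter_dec_in in H as [v' [H1 H2]].
  assert (v = v') as <-; [|exact H1].
  destruct H1 as [_ [_ H1]]. apply H1; auto. congruence.
Qed.

Lemma Irr_iff lab x y u : Cl x y -> (Irr lab x u <-> Irr lab y u).
Proof.
  intro H. unfold Irr. pose proof (Cl_iff x y u H) as E. split; intros [H1 [H2 H3]]; split; try tauto; split; auto.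
  - intros u' Hu'; apply H3; apply (Cl_iff x y u' H); auto.
  - intros u' Hu'; apply H3; apply (Cl_iff x y u' H); auto.
Qed.

Lemma K4 j x y : Cl x y -> cd j x = cd j y.
Proof.
  intro H. unfold cd, cdata. f_equal; [f_equal|]; apply filter_ext; intro v; apply dec_iff.
  - split; intros [u [H1 H2]]; exists u; split; auto; apply (Cl_iff x y u H); auto.
  - split; intros [u [H1 H2]]; exists u; split; auto; apply (Ab_iff x y u H); auto.
  - split; intros [u [H1 H2]]; exists u; split; auto; apply (Irr_iff _ x y u H); auto.
Qed.

Definition D j x y :=
  (cd j x = cd j y /\ (lab j x <> lab j y \/ ~ Irr (lab j) x x)) \/
  (forall y', Req y y' -> exists z, Ab x z /\ lab j y' = lab j z).

Lemma D1 j x y : Rc x y -> D j x y.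
Proof.
  intro H. destruct (classic (Req y x)) as [Hyx|Hyx].
  - left. assert (Hc : Cl x y) by (split; [right|]; auto). split; [apply K4; auto|].
    apply NNPP; intro Hn. apply Hn; left; intro E.
    apply Hn; right; intros [_ [H2 H3]]. assert (y = x) as -> by (apply H3; auto). contradiction.
  - right. intros y' Hy'. exists y'. split; auto. split.
    + destruct Hy' as [<-|Hy']; auto.
      destruct (classic (x = y')) as [<-|E]; [exfalso; apply Hyx; right; auto|].
      exact (Rc_wt PV p0 L x y y' H Hy' E).
    + intro H'. apply Hyx. eapply Req_trans; eauto.
Qed.

Lemma Up_split y y' : Req y y' -> Cl y y' \/ Ab y y'.
Proof. apply Req_up. Qed.

Lemma D2 j x y y' : D j x y -> ptF j y = ptF j y' -> D j x y'.
Proof.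
  unfold ptF. intros HD E. assert (E1 := f_equal fst E); assert (E2 := f_equal snd E); cbn [fst snd] in E1, E2. destruct HD as [[H1 H2]|H].
  - left. split; [congruence|]. rewrite <- E1; auto.
  - right. intros y2 Hy2. destruct (Up_split y' y2 Hy2) as [Hc|Ha].
    + destruct (K1 j y' y y2 (eq_sym E2) Hc) as [v [Hv Hl]].
      destruct (H v) as [z [Hz Hl2]]; [apply Hv|]. exists z; split; congruence.
    + destruct (K2 j y' y y2 (eq_sym E2) Ha) as [v [Hv Hl]].
      destruct (H v) as [z [Hz Hl2]]; [apply Ab_Req; auto|]. exists z; split; congruence.
Qed.

Lemma Irr_self j x x' : cd j x = cd j x' -> lab j x = lab j x' -> (Irr (lab j) x x <-> Irr (lab j) x' x').
Proof.
  intros E1 E2. split; intro H.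
  - apply (K3 j x x' x x'); auto. apply Cl_refl.
  - apply (K3 j x' x x' x); auto. apply Cl_refl.
Qed.

Lemma D3 j x x' y : D j x y -> ptF j x = ptF j x' -> D j x' y.
Proof.
  unfold ptF. intros HD E. assert (E1 := f_equal fst E); assert (E2 := f_equal snd E); cbn [fst snd] in E1, E2. destruct HD as [[H1 H2]|H].
  - left. split; [congruence|]. rewrite <- E1. rewrite <- (Irr_self j x x'); auto.
  - right. intros y2 Hy2. destruct (H y2 Hy2) as [z [Hz Hl]].
    destruct (K2 j x x' z E2 Hz) as [v [Hv Hl2]]. exists v; split; congruence.
Qed.

Lemma D4 j x y : D j x y -> exists x', Rc x x' /\ lab j y = lab j x'.
Proof.
  intros [[H1 H2]|H].
  - destruct (K1 j y x y (eq_sym H1) (Cl_refl y)) as [x' [Hx' Hl]].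
    destruct (classic (x' = x)) as [->|E].
    + destruct H2 as [H2|H2]; [exfalso; apply H2; auto|].
      destruct (classic (Rc x x)) as [Hr|Hr]; [exists x; auto|].
      apply NNPP; intro Hn. apply H2. split; [apply Cl_refl|split; auto].
      intros u' Hu' Hl'. apply NNPP; intro E. apply Hn. exists u'. split; [|congruence].
      apply Cl_R; auto.
    + exists x'. split; auto. apply Cl_R; auto.
  - destruct (H y (Req_refl y)) as [z [[Hz _] Hl]]. exists z; auto.
Qed.

Lemma D5 j x y z : D j x y -> D j y z -> x <> z -> rep j x = x -> rep j z = z -> D j x z.
Proof.
  intros Hxy Hyz Hne Hx Hz. destruct Hxy as [[H1 H2]|H]; destruct Hyz as [[H3 H4]|H'].
  - left. split; [congruence|]. left. intro E. apply Hne. rewrite <- Hx, <- Hz. apply rep_eq.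
    unfold ptF. rewrite E. f_equal; congruence.
  - right. intros z' Hz'. destruct (H' z' Hz') as [w [Hw Hl]].
    destruct (K2 j y x w (eq_sym H1) Hw) as [v [Hv Hl2]]. exists v; split; congruence.
  - right. intros z' Hz'. destruct (Up_split z z' Hz') as [Hc|Ha].
    + destruct (K1 j z y z' (eq_sym H3) Hc) as [v [Hv Hl]].
      destruct (H v) as [w [Hw Hl2]]; [apply Hv|]. exists w; split; congruence.
    + destruct (K2 j z y z' (eq_sym H3) Ha) as [v [Hv Hl]].
      destruct (H v) as [w [Hw Hl2]]; [apply Ab_Req; auto|]. exists w; split; congruence.
  - right. intros z' Hz'. destruct (H' z' Hz') as [w [Hw Hl]].
    destruct (H w (Ab_Req _ _ Hw)) as [v [Hv Hl2]]. exists v; split; congruence.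
Qed.


Lemma rep_lab j x : lab j (rep j x) = lab j x.
Proof. exact (f_equal fst (rep_spec j x)). Qed.

Definition Wt := {p : nat * mw | Nat.leb (fst p) Nd = true /\ rep (fst p) (snd p) = snd p}.

Lemma mkW_ok j x : Nat.leb (fst (Nat.min j Nd, rep (Nat.min j Nd) x)) Nd = true /\
   rep (fst (Nat.min j Nd, rep (Nat.min j Nd) x)) (snd (Nat.min j Nd, rep (Nat.min j Nd) x)) =
   snd (Nat.min j Nd, rep (Nat.min j Nd) x).
Proof. simpl. split; [apply Nat.leb_le; lia|apply rep_idem]. Qed.

Definition mkW j x : Wt := exist _ (Nat.min j Nd, rep (Nat.min j Nd) x) (mkW_ok j x).
Definition wj (w : Wt) := fst (proj1_sig w).
Definition wx (w : Wt) := snd (proj1_sig w).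

Lemma W_eq (w v : Wt) : wj w = wj v -> wx w = wx v -> w = v.
Proof.
  destruct w as [[j x] Hw], v as [[k y] Hv]; unfold wj, wx; simpl; intros -> ->.
  f_equal; apply proof_irrelevance.
Qed.
Lemma W_le w : wj w <= Nd.
Proof. destruct w as [[j x] [H1 H2]]; unfold wj; simpl in *. apply Nat.leb_le; auto. Qed.
Lemma W_rep w : rep (wj w) (wx w) = wx w.
Proof. destruct w as [[j x] [H1 H2]]; unfold wj, wx; simpl in *; auto. Qed.
Lemma mkW_j j x : j <= Nd -> wj (mkW j x) = j.
Proof. intro H; unfold wj, mkW; simpl; lia. Qed.
Lemma mkW_x j x : j <= Nd -> wx (mkW j x) = rep j x.
Proof. intro H; unfold wx, mkW; simpl. replace (Nat.min j Nd) with j by lia. reflexivity. Qed.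
Lemma W_mk w : w = mkW (wj w) (wx w).
Proof. pose proof (W_le w). apply W_eq; rewrite ?mkW_j, ?mkW_x; auto. symmetry; apply W_rep. Qed.
Lemma mkW_repeq j x y : j <= Nd -> rep j x = rep j y -> mkW j x = mkW j y.
Proof. intros H E. apply W_eq; rewrite ?mkW_j, ?mkW_x; auto. Qed.

Definition RN (w v : Wt) := wj w = wj v /\ D (wj w) (wx w) (wx v).
Definition fN (w : Wt) : Wt := match wj w with 0 => w | S j => mkW j (fc (wx w)) end.
Definition nuN (p : PV) (w : Wt) := th (wx w) (Var p).

Lemma fN_mk j x : S j <= Nd -> fN (mkW (S j) x) = mkW j (fc (rep (S j) x)).
Proof. intro H. unfold fN. rewrite (mkW_j _ _ H), (mkW_x _ _ H). reflexivity. Qed.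

Lemma truth b : forall j x, j <= Nd -> In b (Phi j) -> (sat RN fN nuN (mkW j x) b <-> th x b).
Proof.
  induction b as [p|b1 IH1 b2 IH2|b IH|b IH|b IH]; intros j x Hj Hb.
  - simpl. unfold nuN. rewrite (mkW_x _ _ Hj). apply lab_th with (j := j); auto. apply rep_lab.
  - simpl. destruct (Phi_And _ _ _ Hb) as [Hb1 Hb2].
    rewrite (IH1 j x Hj Hb1), (IH2 j x Hj Hb2).
    symmetry. apply (mcs_and (th_mcs PV p0 L x)). exact (Phi_overL _ _ Hb).
  - simpl. rewrite (IH j x Hj (Phi_Neg _ _ Hb)). symmetry. apply th_neg. exact (Phi_overL _ _ (Phi_Neg _ _ Hb)).
  - simpl. pose proof (Phi_Box _ _ Hb) as Hb'.
    rewrite (lab_th j x (rep j x) (Box b) (eq_sym (rep_lab j x)) Hb).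
    rewrite (box_lemma PV p0 L (rep j x) b (Phi_overL _ _ Hb')). split.
    + intros Hs y Hy. apply (IH j y Hj Hb'). apply Hs. split; [rewrite !mkW_j; auto|].
      rewrite (mkW_j _ _ Hj), !(mkW_x _ _ Hj). apply D2 with (y := y); [apply D1; auto|].
      symmetry; apply rep_spec.
    + intros Ht v [Hjv HD]. rewrite (mkW_j _ _ Hj) in Hjv, HD. rewrite (mkW_x _ _ Hj) in HD.
      rewrite (W_mk v), <- Hjv. apply IH; auto.
      destruct (D4 _ _ _ HD) as [x' [Hx' Hl]]. apply (lab_th j x' (wx v) b (eq_sym Hl) Hb'). auto.
  - destruct (Phi_Next _ _ Hb) as [j' [-> Hb']]. simpl.
    rewrite (fN_mk _ _ Hj). rewrite (IH j' _ ltac:(lia) Hb'). rewrite fc_th.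
    apply lab_th with (j := S j'); auto. apply rep_lab.
Qed.

Lemma RN_wt : weakly_transitive RN.
Proof.
  intros w v u [E1 H1] [E2 H2] Hne. split; [congruence|].
  rewrite <- E1 in H2. apply D5 with (y := wx v); auto.
  - intro E. apply Hne. apply W_eq; congruence.
  - apply W_rep.
  - rewrite E1, E2. apply W_rep.
Qed.

Lemma RN_wm : weakly_monotone RN fN.
Proof.
  intros w v [E HD]. pose proof (W_le w) as Hw. unfold fN. rewrite <- E.
  destruct (wj w) as [|j] eqn:Ej.
  - right. split; [congruence|]. rewrite Ej; auto.
  - destruct (D4 _ _ _ HD) as [x' [Hx' Hl]]. apply lab_S_rep in Hl.
    destruct (Rc_wm PV p0 L _ _ Hx') as [F|F].
    + left. apply mkW_repeq; [lia|]. congruence.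
    + right. split; [rewrite !mkW_j; auto; lia|]. rewrite mkW_j, !mkW_x by lia.
      rewrite Hl. apply D2 with (y := rep j (fc x')); [|reflexivity].
      apply D2 with (y := fc x'); [|symmetry; apply rep_spec].
      apply D3 with (x := fc (wx w)); [apply D1; auto|symmetry; apply rep_spec].
Qed.

Lemma W_finite : finite_type Wt.
Proof.
  exists (flat_map (fun j => map (fun v => mkW j (repOfV (ptF j) v)) (list_prod (vals j) (cdvals (vals j))))
                   (seq 0 (S Nd))).
  intro w. apply in_flat_map. exists (wj w). split; [apply in_seq; pose proof (W_le w); lia|].
  apply in_map_iff. exists (ptF (wj w) (wx w)). split.
  - transitivity (mkW (wj w) (wx w)); [|symmetry; apply W_mk].
    apply mkW_repeq; [apply W_le|]. apply rep_eq. apply (rep_spec (wj w) (wx w)).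
  - apply in_prod; [apply lab_in|apply cdata_in].
Qed.

Lemma finite_countermodel : ~ th x0 phi ->
  exists (W : Type) (R : W -> W -> Prop) (f : W -> W), finite_dyn_wK4_frame R f /\ ~ valid_on R f phi.
Proof.
  intro H. exists Wt, RN, fN. split.
  - split; [exact (inhabits (mkW 0 x0))|split; [apply W_finite|split; [apply RN_wt|apply RN_wm]]].
  - intro Hv. apply H. apply (truth phi Nd x0 (le_n _) phi_Phi). apply Hv.
Qed.

End Fin.


Theorem mainTheorem2 (PV : Type) (HPV : inhabited PV) (phi : form PV) :
  wK4C phi <->
  (forall (W : Type) (R : W -> W -> Prop) (f : W -> W),
      finite_dyn_wK4_frame R f -> valid_on R f phi).
Proof.
  split.
  - intros H W R f [_ [_ [wt wm]]] nu w. apply (soundness wt wm); auto.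
  - intro Hv. apply NNPP; intro Hn. destruct HPV as [p0].
    set (L := p0 :: vars phi).
    assert (Hphi : overL L phi) by (intros p Hp; right; auto).
    set (S0 := fun a => a = Neg phi).
    assert (HS : cons p0 S0).
    { intros l Hl Hd.
      destruct (@drop_lemma _ p0 (fun _ => False) (Neg phi) l) as [l' [H1 H2]].
      { intros a Ha; right; apply Hl; auto. }
      apply Hn. destruct l' as [|a l'']; [|destruct (H1 a (or_introl eq_refl))].
      eapply tmp3; [|exact Hd|exact H2|exact (top_thm p0)].
      set (C := conj p0 l). unfold conj, top, is_taut, Imp. intro g. cbn [beval fold_right].
      destruct (beval g C), (beval g phi), (g (Var p0)); reflexivity. }
    assert (HSo : forall a, S0 a -> overL L a) by (intros a ->; exact Hphi).
    set (G := MW PV p0 L _ (Lind_mcs HS HSo)).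
    assert (HG : ~ th PV p0 L G phi).
    { intro H. assert (H' : th PV p0 L G (Neg phi)) by (apply Lind_incl; reflexivity).
      apply (th_neg PV p0 L G phi Hphi) in H'. contradiction. }
    destruct (finite_countermodel PV p0 L phi Hphi G HG) as [W [R [f [Hf Hnv]]]].
    apply Hnv, Hv, Hf.
Qed.
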